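(* There is a constant $c>0$ such that for every positive integer $n$, \[\tfrac54 n-c\sqrt n\;\le\; st_{\mathcal{S}}(n)\;\le\; 2n-\sqrt n .\]
   Context: For a finite set $P$ of points in the plane, no two of which share an $x$-coordinate or a $y$-coordinate, $st_{\mathcal{S}}(P)$ is the minimum of $|W|$ over finite point sets $W$ such that no two distinct points of $P\cup W$ share an $x$-coordinate or a $y$-coordinate and every axis-parallel square whose boundary contains two distinct points of $P$ has a point of $W$ in its interior (equivalently, the $L_\infty$ witness Delaunay graph $\mathrm{SG}^-(P,W)$, in which distinct $p,q\in P$ are adjacent iff some axis-parallel square with $p,q$ on its boundary has no point of $W$ in its interior, has no edges). Define $st_{\mathcal{S}}(n)=\max\{st_{\mathcal{S}}(P): |P|=n\}$, the maximum over such sets $P$ of $n$ points. *)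

(* Defs.v *)
From Stdlib Require Import Reals List.
Import ListNotations.
Open Scope R_scope.

Definition point : Type := (R * R)%type.

Definition general_position (S : list point) : Prop :=
  forall p q, In p S -> In q S -> p <> q -> fst p <> fst q /\ snd p <> snd q.

Definition in_closed_square (a b s : R) (p : point) : Prop :=
  a <= fst p <= a + s /\ b <= snd p <= b + s.

Definition in_open_square (a b s : R) (p : point) : Prop :=
  a < fst p < a + s /\ b < snd p < b + s.

Definition on_boundary (a b s : R) (p : point) : Prop :=
  in_closed_square a b s p /\ ~ in_open_square a b s p.

Definition witness_set (P W : list point) : Prop :=
  NoDup W /\ general_position (P ++ W) /\
  forall (a b s : R) (p q : point),
    0 < s -> In p P -> In q P -> p <> q ->
    on_boundary a b s p -> on_boundary a b s q ->
    exists w, In w W /\ in_open_square a b s w.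

Definition admissible (n : nat) (P : list point) : Prop :=
  NoDup P /\ length P = n /\ general_position P.

Definition is_stS_set (P : list point) (k : nat) : Prop :=
  (exists W, witness_set P W /\ length W = k) /\
  (forall W, witness_set P W -> (k <= length W)%nat).

Definition is_stS (n : nat) (k : nat) : Prop :=
  (exists P, admissible n P /\ is_stS_set P k) /\
  (forall P k', admissible n P -> is_stS_set P k' -> (k' <= k)%nat).

(* Main.v *)
Require Import Defs.
From Stdlib Require Import Reals List Lia Lra Arith ClassicalEpsilon Classical.
Import ListNotations.
Open Scope R_scope.


Definition pb (P : Prop) : bool := if excluded_middle_informative P then true else false.
Lemma pb_spec (P : Prop) : pb P = true <-> P.
Proof. unfold pb; destruct (excluded_middle_informative P); split; auto; discriminate. Qed.
Lemma pb_false (P : Prop) : pb P = false <-> ~ P.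
Proof. unfold pb; destruct (excluded_middle_informative P); split; intros; auto; try discriminate; contradiction. Qed.

Lemma filter_compl {A} (f : A -> bool) (l : list A) :
  (length (filter f l) + length (filter (fun x => negb (f x)) l))%nat = length l.
Proof. induction l as [|a l IH]; simpl; auto. destruct (f a); simpl; lia. Qed.

Lemma filter3 {A} (f g h : A -> bool) (l : list A) :
  (forall x, In x l -> ((if f x then 1 else 0) + (if g x then 1 else 0) + (if h x then 1 else 0) <= 1)%nat) ->
  (length (filter f l) + length (filter g l) + length (filter h l) <= length l)%nat.
Proof.
  induction l as [|a l IH]; simpl; intros H; auto.
  specialize (IH (fun x Hx => H x (or_intror Hx))). specialize (H a (or_introl eq_refl)).
  destruct (f a), (g a), (h a); simpl in *; lia.
Qed.

Lemma max_x (l : list point) : l <> [] -> exists u, In u l /\ forall v, In v l -> fst v <= fst u.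
Proof.
  induction l as [|a l IH]; intros H; [congruence|].
  destruct l as [|b l'].
  - exists a; split; [left; auto|]. intros v [<-|[]]; lra.
  - destruct IH as [u [Hu Hm]]; [discriminate|].
    destruct (Rle_dec (fst a) (fst u)).
    + exists u; split; [right; auto|]. intros v [<-|Hv]; auto.
    + exists a; split; [left; auto|]. intros v [<-|Hv]; [lra|]. specialize (Hm v Hv); lra.
Qed.

Definition NE (p q : point) := fst p < fst q /\ snd p < snd q.
Definition SE (p q : point) := fst p < fst q /\ snd q < snd p.

Definition chainNE (C : list point) := forall u v, In u C -> In v C -> u <> v -> NE u v \/ NE v u.
Definition antiR (R : point -> point -> Prop) (D : list point) := forall u v, In u D -> In v D -> ~ R u v.

Lemma ES (b a : nat) : forall P : list point, NoDup P -> (a * b < length P)%nat ->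
  (exists C, NoDup C /\ incl C P /\ (a + 1 <= length C)%nat /\ chainNE C) \/
  (exists D, NoDup D /\ incl D P /\ (b + 1 <= length D)%nat /\ antiR NE D).
Proof.
  induction a as [|a IH]; intros P HP Hl.
  - left. destruct P as [|p P]; simpl in Hl; [lia|].
    exists [p]; split; [constructor; auto; constructor|]. split; [intros x [<-|[]]; left; auto|].
    split; simpl; [lia|]. intros u v [<-|[]] [<-|[]]; congruence.
  - set (mx := fun p => pb (forall q, In q P -> ~ NE p q)).
    set (M := filter mx P).
    set (P' := filter (fun x => negb (mx x)) P).
    pose proof (filter_compl mx P) as Hc. fold M P' in Hc.
    destruct (le_lt_dec (b+1) (length M)) as [HM|HM].
    + right. exists M. split; [apply NoDup_filter; auto|]. split.
      { intros x Hx. apply filter_In in Hx; tauto. }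
      split; auto. intros u v Hu Hv Huv. apply filter_In in Hu. apply filter_In in Hv.
      destruct Hu as [_ Hu]. unfold mx in Hu. apply (proj1 (pb_spec _)) in Hu. apply (Hu v); tauto.
    + assert (HP' : NoDup P') by (apply NoDup_filter; auto).
      destruct (IH P' HP') as [[C [HC1 [HC2 [HC3 HC4]]]]|[D [HD1 [HD2 [HD3 HD4]]]]].
      { simpl in Hl. nia. }
      * left. destruct (max_x C) as [c [Hc1 Hc2]].
        { intro E; subst; simpl in HC3; lia. }
        assert (HcP' := HC2 c Hc1). apply filter_In in HcP'. destruct HcP' as [HcP Hcm].
        apply Bool.negb_true_iff in Hcm. unfold mx in Hcm. apply (proj1 (pb_false _)) in Hcm.
        apply not_all_ex_not in Hcm. destruct Hcm as [q Hq].
        assert (Hq' : In q P /\ NE c q) by (split; apply NNPP; intro; apply Hq; intros; auto).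
        set (Up := filter (fun w => pb (NE c w)) P).
        destruct (max_x Up) as [d [Hd1 Hd2]].
        { intro E. assert (In q Up) by (apply filter_In; split; [tauto|apply pb_spec; tauto]).
          rewrite E in H; auto. }
        apply filter_In in Hd1. destruct Hd1 as [HdP Hcd]. apply (proj1 (pb_spec _)) in Hcd.
        assert (Hdmax : forall w, In w P -> ~ NE d w).
        { intros w Hw Hdw. assert (In w Up).
          { apply filter_In; split; auto. apply pb_spec. destruct Hcd, Hdw; split; lra. }
          specialize (Hd2 w H). destruct Hdw; lra. }
        assert (HdC : ~ In d C).
        { intro HdC. apply HC2 in HdC. apply filter_In in HdC. destruct HdC as [_ HdC].
          apply Bool.negb_true_iff in HdC. unfold mx in HdC. apply (proj1 (pb_false _)) in HdC. apply HdC. auto. }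
        exists (d :: C). split; [constructor; auto|]. split.
        { intros x [<-|Hx]; auto. apply HC2 in Hx. apply filter_In in Hx; tauto. }
        split; [simpl; lia|].
        assert (Hup : forall u, In u C -> NE u d).
        { intros u Hu. destruct (classic (u = c)) as [->|Hne]; auto.
          destruct (HC4 u c Hu Hc1 Hne) as [H|H].
          - destruct H, Hcd; split; lra.
          - specialize (Hc2 u Hu). destruct H; lra. }
        intros u v [<-|Hu] [<-|Hv] Huv; try congruence.
        -- right; auto.
        -- left; auto.
        -- auto.
      * right. exists D. split; auto. split; auto.
        intros x Hx. apply HD2 in Hx. apply filter_In in Hx; tauto.
Qed.

Lemma cover (R : point -> point -> Prop)
  (Htr : forall a b c, R a b -> R b c -> R a c) (P N : list point) :
  NoDup N -> incl N P -> antiR R N ->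
  exists A B, incl A P /\ incl B P /\ NoDup A /\ NoDup B /\ NoDup P \/ True /\
   (length A + length B + length N <= length P)%nat /\
   (forall p q, In p P -> In q P -> R p q -> In p A \/ In q B).
Abort.

Lemma cover (R : point -> point -> Prop)
  (Htr : forall a b c, R a b -> R b c -> R a c) (P N : list point) :
  NoDup P -> NoDup N -> incl N P -> antiR R N ->
  exists A B, incl A P /\ incl B P /\ NoDup A /\ NoDup B /\
   (length A + length B + length N <= length P)%nat /\
   (forall p q, In p P -> In q P -> R p q -> In p A \/ In q B).
Proof.
  intros HP HN HNP Hanti.
  set (up := fun q => exists n, In n N /\ R n q).
  exists (filter (fun p => pb (~ In p N /\ ~ up p)) P), (filter (fun p => pb (up p)) P).
  split; [intros x Hx; apply filter_In in Hx; tauto|].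
  split; [intros x Hx; apply filter_In in Hx; tauto|].
  split; [apply NoDup_filter; auto|]. split; [apply NoDup_filter; auto|].
  split.
  - assert (Hl : (length N <= length (filter (fun p => pb (In p N)) P))%nat).
    { apply NoDup_incl_length; auto. intros x Hx. apply filter_In. split; auto. apply pb_spec; auto. }
    pose proof (filter3 (fun p => pb (~ In p N /\ ~ up p)) (fun p => pb (up p)) (fun p => pb (In p N)) P) as H3.
    assert (H3' : (length (filter (fun p => pb (~ In p N /\ ~ up p)) P) + length (filter (fun p => pb (up p)) P) + length (filter (fun p => pb (In p N)) P) <= length P)%nat).
    { apply H3. intros x _.
      destruct (pb (~ In x N /\ ~ up x)) eqn:E1, (pb (up x)) eqn:E2, (pb (In x N)) eqn:E3; auto;
      try apply (proj1 (pb_spec _)) in E1; try apply (proj1 (pb_spec _)) in E2; try apply (proj1 (pb_spec _)) in E3;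
      exfalso; try tauto.
      destruct E2 as [m [Hm Hmx]]. apply (Hanti m x); auto. }
    lia.
  - intros p q Hp Hq Hpq.
    destruct (classic (up p)) as [Hu|Hu].
    + right. apply filter_In; split; auto. apply pb_spec. destruct Hu as [m [Hm Hmp]]. exists m; split; eauto.
    + destruct (classic (In p N)) as [Hi|Hi].
      * right. apply filter_In; split; auto. apply pb_spec. exists p; auto.
      * left. apply filter_In; split; auto. apply pb_spec; auto.
Qed.

Lemma pos_lb (f : point -> R) (l : list point) :
  (forall q, In q l -> 0 < f q) -> exists g, 0 < g /\ forall q, In q l -> g <= f q.
Proof.
  induction l as [|a l IH]; intros H.
  - exists 1; split; [lra|intros q []].
  - destruct IH as [g [Hg Hgq]]; [intros; apply H; right; auto|].
    exists (Rmin g (f a)). split; [apply Rmin_pos; auto; apply H; left; auto|].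
    intros q [<-|Hq]; [apply Rmin_r|]. eapply Rle_trans; [apply Rmin_l|auto].
Qed.

Definition sep (g : R) (p q : point) :=
  (g <= fst p - fst q \/ g <= fst q - fst p) /\ (g <= snd p - snd q \/ g <= snd q - snd p).

Lemma sep_sym g p q : sep g p q -> sep g q p.
Proof. unfold sep; intros [[|] [|]]; split; auto. Qed.

Lemma gap (P : list point) : NoDup P -> general_position P ->
  exists g, 0 < g /\ forall p q, In p P -> In q P -> p <> q -> sep g p q.
Proof.
  induction P as [|a P IH]; intros HN Hgp.
  - exists 1; split; [lra|intros p q []].
  - inversion HN as [|a' P' Hna HNP]; subst.
    destruct IH as [g1 [Hg1 H1]]; auto.
    { intros p q Hp Hq; apply Hgp; right; auto. }
    destruct (pos_lb (fun q => Rmin (Rabs (fst a - fst q)) (Rabs (snd a - snd q))) P) as [g2 [Hg2 H2]].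
    { intros q Hq. assert (a <> q) by (intro E; subst; contradiction).
      destruct (Hgp a q (or_introl eq_refl) (or_intror Hq) H) as [Hx Hy].
      apply Rmin_pos; apply Rabs_pos_lt; intro; [apply Hx|apply Hy]; lra. }
    exists (Rmin g1 g2). split; [apply Rmin_pos; auto|].
    assert (Ha : forall q, In q P -> sep (Rmin g1 g2) a q).
    { intros q Hq. specialize (H2 q Hq). simpl in H2.
      assert (Hm1 := Rmin_r g1 g2).
      assert (Hx := Rmin_l (Rabs (fst a - fst q)) (Rabs (snd a - snd q))).
      assert (Hy := Rmin_r (Rabs (fst a - fst q)) (Rabs (snd a - snd q))).
      set (m := Rmin (Rabs (fst a - fst q)) (Rabs (snd a - snd q))) in *.
      unfold sep. split.
      - unfold Rabs in Hx; destruct (Rcase_abs (fst a - fst q)); [right|left]; lra.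
      - unfold Rabs in Hy; destruct (Rcase_abs (snd a - snd q)); [right|left]; lra. }
    intros p q [<-|Hp] [<-|Hq] Hpq; try congruence.
    + apply Ha; auto.
    + apply sep_sym, Ha; auto.
    + specialize (H1 p q Hp Hq Hpq). unfold sep in *.
      assert (Rmin g1 g2 <= g1) by apply Rmin_l. lra.
Qed.

Definition off (o : R * R) (p : point) : point := (fst p + fst o, snd p + snd o).
Definition Offs (e : R) : list (R*R) := [(0,0); (e,e); (-e,-e); (2*e,-(2*e)); (-(2*e),2*e)].

Lemma offs_prop e o1 o2 : 0 < e -> In o1 (Offs e) -> In o2 (Offs e) ->
  (o1 = o2 \/ (fst o1 <> fst o2 /\ snd o1 <> snd o2)) /\
  (- (5*e) < fst o1 - fst o2 < 5*e) /\ (- (5*e) < snd o1 - snd o2 < 5*e).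
Proof.
  intros He H1 H2. unfold Offs in *.
  destruct H1 as [<-|[<-|[<-|[<-|[<-|[]]]]]]; destruct H2 as [<-|[<-|[<-|[<-|[<-|[]]]]]]; simpl;
  (split; [first [left; reflexivity | right; split; lra] | split; lra]).
Qed.

Lemma key e g P o1 o2 p q : 0 < e -> 5 * e <= g ->
  (forall p q, In p P -> In q P -> p <> q -> sep g p q) ->
  In o1 (Offs e) -> In o2 (Offs e) -> In p P -> In q P -> off o1 p = off o2 q -> o1 = o2 /\ p = q.
Proof.
  intros He Hg Hsep H1 H2 Hp Hq E. unfold off in E. injection E; intros Ey Ex.
  destruct (offs_prop e o1 o2 He H1 H2) as [[Ho|[Hx Hy]] [Hdx Hdy]].
  - subst. split; auto. destruct (classic (p = q)) as [|Hne]; auto.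
    destruct (Hsep p q Hp Hq Hne) as [[|] _]; lra.
  - exfalso. destruct (classic (p = q)) as [<-|Hne]; [lra|].
    destruct (Hsep p q Hp Hq Hne) as [[|] _]; lra.
Qed.

Lemma in_box_sq a b s p q w :
  on_boundary a b s p -> on_boundary a b s q ->
  (fst p < fst w < fst q \/ fst q < fst w < fst p) ->
  (snd p < snd w < snd q \/ snd q < snd w < snd p) -> in_open_square a b s w.
Proof.
  unfold on_boundary, in_closed_square, in_open_square. intros [[Hp1 Hp2] _] [[Hq1 Hq2] _] Hx Hy.
  split; lra.
Qed.

Lemma NE_trans a b c : NE a b -> NE b c -> NE a c.
Proof. unfold NE; intros; lra. Qed.
Lemma SE_trans a b c : SE a b -> SE b c -> SE a c.
Proof. unfold SE; intros; lra. Qed.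

Lemma anti_nil R : antiR R [].
Proof. intros u v []. Qed.

Lemma build (n m : nat) (P : list point) : admissible n P ->
  (exists N, NoDup N /\ incl N P /\ (m <= length N)%nat /\ (antiR NE N \/ antiR SE N)) ->
  exists W, witness_set P W /\ (length W + m <= 2 * n)%nat.
Proof.
  intros [HnP [Hlen Hgp]] [N [HN [HNP [HmN Hanti]]]].
  assert (HX : exists N1 N2, NoDup N1 /\ NoDup N2 /\ incl N1 P /\ incl N2 P /\ antiR NE N1 /\ antiR SE N2 /\
     (m <= length N1 + length N2)%nat).
  { destruct Hanti as [Ha|Ha].
    - exists N, []. split; [auto|split; [constructor|split; [auto|split; [intros x []|split; [auto|split; [apply anti_nil|simpl; lia]]]]]].
    - exists [], N. split; [constructor|split; [auto|split; [intros x []|split; [auto|split; [apply anti_nil|split; [auto|simpl; lia]]]]]]. }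
  clear N HN HNP HmN Hanti. destruct HX as [N1 [N2 [HN1 [HN2 [HI1 [HI2 [HA1 [HA2 Hm]]]]]]]].
  destruct (cover NE NE_trans P N1 HnP HN1 HI1 HA1) as [A1 [B1 [HA1P [HB1P [HA1d [HB1d [Hc1 Hcov1]]]]]]].
  destruct (cover SE SE_trans P N2 HnP HN2 HI2 HA2) as [A2 [B2 [HA2P [HB2P [HA2d [HB2d [Hc2 Hcov2]]]]]]].
  destruct (gap P HnP Hgp) as [g [Hg Hsep]].
  set (e := g / 5). assert (He : 0 < e) by (unfold e; lra). assert (Heg : 5 * e <= g) by (unfold e; lra).
  set (oNE := (e,e)). set (oSW := (-e,-e)). set (oSE := (2*e,-(2*e))). set (oNW := (-(2*e),2*e)).
  assert (InNE : In oNE (Offs e)) by (unfold Offs; simpl; tauto).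
  assert (InSW : In oSW (Offs e)) by (unfold Offs; simpl; tauto).
  assert (InSE : In oSE (Offs e)) by (unfold Offs; simpl; tauto).
  assert (InNW : In oNW (Offs e)) by (unfold Offs; simpl; tauto).
  assert (In0 : In (0,0) (Offs e)) by (unfold Offs; simpl; tauto).
  set (W := map (off oNE) A1 ++ map (off oSW) B1 ++ map (off oSE) A2 ++ map (off oNW) B2).
  exists W. split.
  2:{ unfold W. rewrite !length_app, !length_map. lia. }
  assert (Hrep : forall x, In x (P ++ W) -> exists o p, In o (Offs e) /\ In p P /\ x = off o p).
  { intros x Hx. apply in_app_or in Hx. destruct Hx as [Hx|Hx].
    - exists (0,0), x. split; auto. split; auto. unfold off; simpl. rewrite !Rplus_0_r. destruct x; reflexivity.
    - unfold W in Hx. repeat (apply in_app_or in Hx; destruct Hx as [Hx|Hx]);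
      apply in_map_iff in Hx; destruct Hx as [p [<- Hp]]; eexists; exists p;
      (split; [|split; [first [apply HA1P; assumption|apply HB1P; assumption|apply HA2P; assumption|apply HB2P; assumption] | reflexivity]]); assumption. }
  assert (Hmapnd : forall o L, In o (Offs e) -> incl L P -> NoDup L -> NoDup (map (off o) L)).
  { intros o L Ho HL HLd. apply NoDup_map_NoDup_ForallPairs; auto.
    intros x y Hx Hy E. eapply key in E; eauto. tauto. }
  assert (Hdisj : forall o1 o2 L1 L2 x, In o1 (Offs e) -> In o2 (Offs e) -> o1 <> o2 -> incl L1 P -> incl L2 P ->
     In x (map (off o1) L1) -> ~ In x (map (off o2) L2)).
  { intros o1 o2 L1 L2 x H1 H2 Hne HL1 HL2 Hx1 Hx2.
    apply in_map_iff in Hx1. apply in_map_iff in Hx2. destruct Hx1 as [p [<- Hp]]. destruct Hx2 as [q [E Hq]].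
    eapply key in E; eauto. apply Hne; symmetry; tauto. }
  assert (Hneq : forall a1 a2 b1 b2 : R, a1 <> b1 -> (a1,a2) <> (b1,b2)).
  { intros a1 a2 b1 b2 H E; injection E; intros; auto. }
  split; [|split].
  - assert (Hd : forall o1 o2 L1 L2 x, In o1 (Offs e) -> In o2 (Offs e) -> fst o1 <> fst o2 -> incl L1 P -> incl L2 P ->
       In x (map (off o1) L1) -> ~ In x (map (off o2) L2)).
    { intros o1 o2 L1 L2 x H1 H2 H3. apply Hdisj; auto. intro E; subst; auto. }
    unfold W. apply NoDup_app; [apply Hmapnd; auto|apply NoDup_app; [apply Hmapnd; auto|apply NoDup_app; [apply Hmapnd; auto|apply Hmapnd; auto|]|]|].
    + intros x Hx; apply (Hd oSE oNW A2 B2 x); auto; unfold oSE, oNW; simpl; lra.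
    + intros x Hx Hx2. apply in_app_or in Hx2; destruct Hx2 as [Hx2|Hx2].
      * revert Hx2; apply (Hd oSW oSE B1 A2 x); auto; unfold oSE, oSW; simpl; lra.
      * revert Hx2; apply (Hd oSW oNW B1 B2 x); auto; unfold oSW, oNW; simpl; lra.
    + intros x Hx Hx2. apply in_app_or in Hx2; destruct Hx2 as [Hx2|Hx2]; [|apply in_app_or in Hx2; destruct Hx2 as [Hx2|Hx2]].
      * revert Hx2; apply (Hd oNE oSW A1 B1 x); auto; unfold oNE, oSW; simpl; lra.
      * revert Hx2; apply (Hd oNE oSE A1 A2 x); auto; unfold oNE, oSE; simpl; lra.
      * revert Hx2; apply (Hd oNE oNW A1 B2 x); auto; unfold oNE, oNW; simpl; lra.
  - intros x y Hx Hy Hxy. destruct (Hrep x Hx) as [o1 [p1 [Ho1 [Hp1 ->]]]].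
    destruct (Hrep y Hy) as [o2 [p2 [Ho2 [Hp2 ->]]]].
    destruct (offs_prop e o1 o2 He Ho1 Ho2) as [Ho [Hdx Hdy]]. unfold off; simpl.
    destruct (classic (p1 = p2)) as [<-|Hne].
    + destruct Ho as [<-|[Hx1 Hy1]]; [congruence|]. split; intro; [apply Hx1|apply Hy1]; lra.
    + destruct (Hsep p1 p2 Hp1 Hp2 Hne) as [[|] [|]]; split; lra.
  - intros a b s p q Hs Hp Hq Hpq Hbp Hbq.
    destruct (Hsep p q Hp Hq Hpq) as [Hx Hy].
    assert (Hin : forall o r L, In r L -> In (off o r) (map (off o) L)) by (intros; apply in_map; auto).
    destruct Hx as [Hx|Hx]; destruct Hy as [Hy|Hy].
    +
      assert (NE q p) by (unfold NE; lra).
      destruct (Hcov1 q p Hq Hp H) as [H1|H1].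
      * exists (off oNE q). split; [unfold W; apply in_or_app; left; auto|].
        apply (in_box_sq a b s p q); auto; unfold off, oNE; simpl; lra.
      * exists (off oSW p). split; [unfold W; apply in_or_app; right; apply in_or_app; left; auto|].
        apply (in_box_sq a b s p q); auto; unfold off, oSW; simpl; lra.
    +
      assert (SE q p) by (unfold SE; lra).
      destruct (Hcov2 q p Hq Hp H) as [H1|H1].
      * exists (off oSE q). split; [unfold W; apply in_or_app; right; apply in_or_app; right; apply in_or_app; left; auto|].
        apply (in_box_sq a b s p q); auto; unfold off, oSE; simpl; lra.
      * exists (off oNW p). split; [unfold W; apply in_or_app; right; apply in_or_app; right; apply in_or_app; right; auto|].
        apply (in_box_sq a b s p q); auto; unfold off, oNW; simpl; lra.
    + assert (SE p q) by (unfold SE; lra).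
      destruct (Hcov2 p q Hp Hq H) as [H1|H1].
      * exists (off oSE p). split; [unfold W; apply in_or_app; right; apply in_or_app; right; apply in_or_app; left; auto|].
        apply (in_box_sq a b s p q); auto; unfold off, oSE; simpl; lra.
      * exists (off oNW q). split; [unfold W; apply in_or_app; right; apply in_or_app; right; apply in_or_app; right; auto|].
        apply (in_box_sq a b s p q); auto; unfold off, oNW; simpl; lra.
    + assert (NE p q) by (unfold NE; lra).
      destruct (Hcov1 p q Hp Hq H) as [H1|H1].
      * exists (off oNE p). split; [unfold W; apply in_or_app; left; auto|].
        apply (in_box_sq a b s p q); auto; unfold off, oNE; simpl; lra.
      * exists (off oSW q). split; [unfold W; apply in_or_app; right; apply in_or_app; left; auto|].
        apply (in_box_sq a b s p q); auto; unfold off, oSW; simpl; lra.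
Qed.

Lemma upper (n m0 : nat) : ((m0 - 1) * (m0 - 1) < n)%nat -> forall P, admissible n P ->
  exists W, witness_set P W /\ (length W + m0 <= 2 * n)%nat.
Proof.
  intros Hm P HP. apply build; auto.
  destruct HP as [HnP [Hlen _]].
  destruct (ES (m0-1) (m0-1) P HnP ltac:(lia)) as [[Cc [H1 [H2 [H3 H4]]]]|[D [H1 [H2 [H3 H4]]]]].
  - exists Cc. split; auto. split; auto. split; [lia|]. right.
    intros u v Hu Hv Huv. destruct (classic (u = v)) as [<-|Hne].
    + destruct Huv; lra.
    + destruct (H4 u v Hu Hv Hne) as [[]|[]]; destruct Huv; lra.
  - exists D. split; auto. split; auto. split; [lia|]. left; auto.
Qed.

Definition sq := ((R * R) * R)%type.
Definition opensq (S : sq) (w : point) := in_open_square (fst (fst S)) (snd (fst S)) (snd S) w.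
Definition disj (S1 S2 : sq) := forall w, opensq S1 w -> opensq S2 w -> False.

Lemma count (W : list point) : forall L : list sq, ForallOrdPairs disj L ->
  (forall S, In S L -> exists w, In w W /\ opensq S w) ->
  exists V, NoDup V /\ length V = length L /\ forall v, In v V -> In v W /\ exists S, In S L /\ opensq S v.
Proof.
  induction L as [|S L IH]; intros HF Hh.
  - exists []. split; [constructor|]. split; auto. intros v [].
  - inversion HF as [|? ? Hall HF']; subst.
    destruct IH as [V [HV1 [HV2 HV3]]]; auto. { intros; apply Hh; right; auto. }
    destruct (Hh S (or_introl eq_refl)) as [w [Hw HSw]].
    exists (w :: V). split.
    + constructor; auto. intro HwV. destruct (HV3 w HwV) as [_ [S' [HS' HS'w]]].
      rewrite Forall_forall in Hall. exact (Hall S' HS' w HSw HS'w).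
    + split; simpl; auto. intros v [<-|Hv]; [split; auto; exists S; auto|].
      destruct (HV3 v Hv) as [Hv1 [S' [HS' HS'v]]]; split; auto; exists S'; auto.
Qed.

Lemma count_len (W : list point) (L : list sq) : ForallOrdPairs disj L ->
  (forall S, In S L -> exists w, In w W /\ opensq S w) -> (length L <= length W)%nat.
Proof.
  intros HF Hh. destruct (count W L HF Hh) as [V [H1 [H2 H3]]]. rewrite <- H2.
  apply NoDup_incl_length; auto. intros v Hv; apply H3; auto.
Qed.

Lemma FOP_app (l1 l2 : list sq) : ForallOrdPairs disj l1 -> ForallOrdPairs disj l2 ->
  (forall a b, In a l1 -> In b l2 -> disj a b) -> ForallOrdPairs disj (l1 ++ l2).
Proof.
  induction l1 as [|a l1 IH]; intros H1 H2 H3; simpl; auto.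
  inversion H1; subst. constructor.
  - apply Forall_app; split; auto. apply Forall_forall. intros; apply H3; simpl; auto.
  - apply IH; auto. intros; apply H3; simpl; auto.
Qed.

Lemma FOP_seq (f : nat -> sq) : (forall i j, (i < j)%nat -> disj (f i) (f j)) ->
  forall k s, ForallOrdPairs disj (map f (seq s k)).
Proof.
  intros H. induction k as [|k IH]; intros s; simpl; constructor.
  - apply Forall_forall. intros x Hx. apply in_map_iff in Hx. destruct Hx as [j [<- Hj]].
    apply in_seq in Hj. apply H; lia.
  - apply IH.
Qed.

Definition Bp (a : nat) : point := (2 * INR a, 2 * INR a).
Definition Tp (a : nat) : point := (2 * INR a + 3, 2 * INR a - 3).
Definition Bot (c : nat) : sq := ((2 * INR c, 2 * INR c), 2).
Definition Top (c : nat) : sq := ((2 * INR c + 3, 2 * INR c - 3), 2).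
Definition Ver (j : nat) : sq := ((4 * INR j, 4 * INR j - 3), 3).

Lemma lt_R (i j : nat) : (i < j)%nat -> INR i + 1 <= INR j.
Proof. intros H. rewrite <- S_INR. apply le_INR. lia. Qed.
Lemma ge_R (i j : nat) : (j <= i)%nat -> INR j <= INR i.
Proof. apply le_INR. Qed.
Lemma pos_R (i : nat) : 0 <= INR i.
Proof. apply pos_INR. Qed.

Ltac uo := unfold disj, opensq, in_open_square, Bot, Top, Ver; simpl.

Lemma dBB i j : (i < j)%nat -> disj (Bot i) (Bot j).
Proof. intros H w. uo. pose proof (lt_R i j H). lra. Qed.
Lemma dTT i j : (i < j)%nat -> disj (Top i) (Top j).
Proof. intros H w. uo. pose proof (lt_R i j H). lra. Qed.
Lemma dVV i j : (i < j)%nat -> disj (Ver i) (Ver j).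
Proof. intros H w. uo. pose proof (lt_R i j H). lra. Qed.
Lemma dBT i j : disj (Bot i) (Top j).
Proof. intros w. uo. lra. Qed.
Lemma dBV c j : disj (Bot c) (Ver j).
Proof.
  intros w. uo. destruct (Nat.lt_ge_cases c (2*j)) as [H|H].
  - pose proof (lt_R _ _ H). rewrite mult_INR in H0. simpl in H0. lra.
  - pose proof (ge_R _ _ H). rewrite mult_INR in H0. simpl in H0. lra.
Qed.
Lemma dTV c j : disj (Top c) (Ver j).
Proof.
  intros w. uo. destruct (Nat.lt_ge_cases c (2*j)) as [H|H].
  - pose proof (lt_R _ _ H). rewrite mult_INR in H0. simpl in H0. lra.
  - pose proof (ge_R _ _ H). rewrite mult_INR in H0. simpl in H0. lra.
Qed.

Definition Lsq (T : nat) : list sq :=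
  map Bot (seq 0 (2*T-1)) ++ map Top (seq 0 (2*T-1)) ++ map Ver (seq 0 T).

Lemma Lsq_FOP T : ForallOrdPairs disj (Lsq T).
Proof.
  unfold Lsq. apply FOP_app; [apply FOP_seq, dBB|apply FOP_app; [apply FOP_seq, dTT|apply FOP_seq, dVV|]|].
  - intros a b Ha Hb. apply in_map_iff in Ha, Hb. destruct Ha as [i [<- _]]. destruct Hb as [j [<- _]]. apply dTV.
  - intros a b Ha Hb. apply in_map_iff in Ha. destruct Ha as [i [<- _]].
    apply in_app_or in Hb. destruct Hb as [Hb|Hb]; apply in_map_iff in Hb; destruct Hb as [j [<- _]].
    + apply dBT.
    + apply dBV.
Qed.

Definition P0 (n : nat) : list point :=
  map Bp (seq 0 (n - 2 * (n/4))) ++ map Tp (seq 0 (2 * (n/4))).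

Lemma INR_inj_lin (a b : nat) (k1 k2 : nat) : 2 * INR a + INR k1 = 2 * INR b + INR k2 -> (2*a + k1 = 2*b + k2)%nat.
Proof. intros H. apply INR_eq. rewrite !plus_INR, !mult_INR. simpl. lra. Qed.

Lemma P0_adm n : admissible n (P0 n).
Proof.
  unfold admissible, P0. split; [|split].
  - apply NoDup_app.
    + apply NoDup_map_NoDup_ForallPairs; [|apply seq_NoDup].
      intros x y _ _ E. unfold Bp in E. injection E; intros E1 _.
      assert (2 * x + 0 = 2 * y + 0)%nat by (apply INR_inj_lin; simpl; lra). lia.
    + apply NoDup_map_NoDup_ForallPairs; [|apply seq_NoDup].
      intros x y _ _ E. unfold Tp in E. injection E; intros E1 _.
      assert (2 * x + 0 = 2 * y + 0)%nat by (apply INR_inj_lin; simpl; lra). lia.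
    + intros a Ha Hb. apply in_map_iff in Ha, Hb. destruct Ha as [i [<- _]]. destruct Hb as [j [E _]].
      unfold Bp, Tp in E. injection E; intros _ E1.
      assert (2 * j + 3 = 2 * i + 0)%nat by (apply INR_inj_lin; simpl; lra). lia.
  - rewrite length_app, !length_map, !length_seq.
    pose proof (Nat.div_mod_eq n 4). pose proof (Nat.mod_upper_bound n 4). lia.
  - intros p q Hp Hq Hpq.
    apply in_app_or in Hp, Hq.
    destruct Hp as [Hp|Hp]; apply in_map_iff in Hp; destruct Hp as [i [<- _]];
    destruct Hq as [Hq|Hq]; apply in_map_iff in Hq; destruct Hq as [j [<- _]]; unfold Bp, Tp in *; simpl;
    (split; intro E;
     [ first [ assert (2*i+0 = 2*j+0)%nat by (apply INR_inj_lin; simpl; lra)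
             | assert (2*i+0 = 2*j+3)%nat by (apply INR_inj_lin; simpl; lra)
             | assert (2*i+3 = 2*j+0)%nat by (apply INR_inj_lin; simpl; lra) ]
     | first [ assert (2*i+0 = 2*j+0)%nat by (apply INR_inj_lin; simpl; lra)
             | assert (2*i+3 = 2*j+0)%nat by (apply INR_inj_lin; simpl; lra)
             | assert (2*i+0 = 2*j+3)%nat by (apply INR_inj_lin; simpl; lra) ] ]);
    try lia; (assert (i = j) by lia; subst; congruence).
Qed.

Lemma hits n W : witness_set (P0 n) W -> forall S, In S (Lsq (n/4)) -> exists w, In w W /\ opensq S w.
Proof.
  intros [_ [_ HW]] S HS.
  pose proof (Nat.div_mod_eq n 4%nat). pose proof (Nat.mod_upper_bound n 4%nat ltac:(lia)).
  set (T := (n / 4)%nat) in *.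
  assert (HB : forall a, (a < 2 * T)%nat -> In (Bp a) (P0 n)).
  { intros a Ha. unfold P0. apply in_or_app; left. apply in_map. apply in_seq. fold T. lia. }
  assert (HT : forall a, (a < 2 * T)%nat -> In (Tp a) (P0 n)).
  { intros a Ha. unfold P0. apply in_or_app; right. apply in_map. apply in_seq. fold T. lia. }
  unfold Lsq in HS. apply in_app_or in HS. destruct HS as [HS|HS]; [|apply in_app_or in HS; destruct HS as [HS|HS]];
  apply in_map_iff in HS; destruct HS as [c [<- Hc]]; apply in_seq in Hc; unfold opensq; simpl.
  - apply (HW _ _ _ (Bp c) (Bp (S c))); [lra|apply HB; lia|apply HB; lia| | |];
    unfold Bp, on_boundary, in_closed_square, in_open_square; cbn [fst snd]; rewrite ?S_INR.
    + intro E. injection E. lra.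
    + split; [lra|]. lra.
    + split; [lra|]. lra.
  - apply (HW _ _ _ (Tp c) (Tp (S c))); [lra|apply HT; lia|apply HT; lia| | |];
    unfold Tp, on_boundary, in_closed_square, in_open_square; cbn [fst snd]; rewrite ?S_INR.
    + intro E. injection E. lra.
    + split; [lra|]. lra.
    + split; [lra|]. lra.
  - apply (HW _ _ _ (Bp (2*c)) (Tp (2*c))); [lra|apply HB; lia|apply HT; lia| | |];
    unfold Bp, Tp, on_boundary, in_closed_square, in_open_square; cbn [fst snd]; rewrite ?mult_INR; simpl (INR 2).
    + intro E. injection E. lra.
    + split; [lra|]. lra.
    + split; [lra|]. lra.
Qed.

Lemma min_exists (Q : nat -> Prop) : forall k, Q k -> exists m, Q m /\ forall j, Q j -> (m <= j)%nat.
Proof.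
  intros k. induction k as [k IH] using (well_founded_induction lt_wf). intros Hk.
  destruct (classic (exists j, (j < k)%nat /\ Q j)) as [[j [Hj HQ]]|Hn].
  - apply (IH j Hj HQ).
  - exists k. split; auto. intros j Hj. destruct (le_lt_dec k j); auto. exfalso; apply Hn; eauto.
Qed.

Lemma max_exists (Q : nat -> Prop) (U : nat) : (forall j, Q j -> (j <= U)%nat) ->
  forall d k, (U - k <= d)%nat -> Q k -> exists m, Q m /\ forall j, Q j -> (j <= m)%nat.
Proof.
  intros HU d. induction d as [|d IH]; intros k Hd Hk.
  - exists k. split; auto. intros j Hj. pose proof (HU j Hj). pose proof (HU k Hk). lia.
  - destruct (classic (exists j, (k < j)%nat /\ Q j)) as [[j [Hj HQ]]|Hn].
    + apply (IH j); auto. specialize (HU j HQ). lia.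
    + exists k. split; auto. intros j Hj. destruct (le_lt_dec j k); auto. exfalso; apply Hn; eauto.
Qed.

Theorem mainTheorem17 :
  exists c : R, 0 < c /\
    forall n : nat, (1 <= n)%nat ->
      exists k : nat, is_stS n k /\
        5 / 4 * INR n - c * sqrt (INR n) <= INR k /\
        INR k <= 2 * INR n - sqrt (INR n).
Proof.
  exists 7. split; [lra|]. intros n Hn.
  set (m0 := Nat.sqrt_up n).
  destruct (Nat.sqrt_up_spec n ltac:(lia)) as [Hs1 Hs2]. fold m0 in Hs1, Hs2.
  assert (Hm0 : ((m0 - 1) * (m0 - 1) < n)%nat) by (rewrite <- Nat.sub_1_r in Hs1; exact Hs1).
  assert (Step1 : forall P, admissible n P -> exists k, is_stS_set P k).
  { intros P HP. destruct (upper n m0 Hm0 P HP) as [W [HW _]].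
    destruct (min_exists (fun j => exists W, witness_set P W /\ length W = j) (length W)) as [k [Hk Hmin]].
    { exists W; auto. }
    exists k. split; auto. intros W' HW'. apply Hmin. exists W'; auto. }
  set (St := fun j => exists P, admissible n P /\ is_stS_set P j).
  assert (HU : forall j, St j -> (j + m0 <= 2 * n)%nat).
  { intros j [P [HP [_ Hj]]]. destruct (upper n m0 Hm0 P HP) as [W [HW HWl]].
    specialize (Hj W HW). lia. }
  destruct (Step1 (P0 n) (P0_adm n)) as [k0 Hk0].
  assert (St0 : St k0) by (exists (P0 n); split; auto; apply P0_adm).
  destruct (max_exists St (2 * n) (fun j Hj => ltac:(specialize (HU j Hj); lia)) (2*n) k0 ltac:(lia) St0)
    as [k [Hk Hmax]].
  exists k. split.
  { split; auto. intros P k' HP Hk'. apply Hmax. exists P; auto. }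
  assert (Hk0k : (k0 <= k)%nat) by (apply Hmax; auto).
  assert (Hkm : (k + m0 <= 2 * n)%nat) by (apply HU; auto).
  destruct Hk0 as [[W0 [HW0 HW0l]] _].
  pose proof (count_len W0 (Lsq (n/4)) (Lsq_FOP _) (hits n W0 HW0)) as Hc.
  unfold Lsq in Hc. rewrite !length_app, !length_map, !length_seq in Hc.
  pose proof (Nat.div_mod_eq n 4%nat). pose proof (Nat.mod_upper_bound n 4%nat ltac:(lia)).
  assert (Hnat : (5 * n <= 4 * k + 28)%nat).
  { set (T := (n/4)%nat) in *. set (r := (n mod 4)%nat) in *. clearbody T r. clear -Hc H H0 HW0l Hk0k. lia. }
  assert (Hsq : sqrt (INR n) <= INR m0).
  { rewrite <- (sqrt_square (INR m0)) by apply pos_INR. apply sqrt_le_1_alt.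
    rewrite <- mult_INR. apply le_INR; auto. }
  assert (Hsq1 : 1 <= sqrt (INR n)).
  { rewrite <- sqrt_1. apply sqrt_le_1_alt. apply (le_INR 1). auto. }
  apply le_INR in Hnat. apply le_INR in Hkm.
  assert (E1 : INR (4 * k + 28) = 4 * INR k + 28) by (rewrite plus_INR, mult_INR; simpl; lra).
  assert (E2 : INR (5 * n) = 5 * INR n) by (rewrite mult_INR; simpl; lra).
  assert (E3 : INR (k + m0) = INR k + INR m0) by apply plus_INR.
  assert (E4 : INR (2 * n) = 2 * INR n) by (rewrite mult_INR; simpl; lra).
  rewrite E1, E2 in Hnat. rewrite E3, E4 in Hkm.
  split; lra.
Qed.
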